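(* Let $K$ be a field, $S=K[x_1,\dots,x_n]$, $A\subseteq\{1,\dots,n\}$ and $f=\prod_{j\in A}x_j$. Let $J\subset I\subset S$ be monomial ideals and let $$\mathcal D:\ I/J=\bigoplus_{i=1}^r u_iK[Z_i]$$ be a Stanley decomposition of $I/J$ (so $u_i$ are monomials and $Z_i\subseteq\{x_1,\dots,x_n\}$). Put $C=\{i:\ x_j\in Z_i \text{ for all } j\in A\}$, and for $L\subseteq A$ put $f_L=\prod_{l\in L}x_l$ and $$Z_i^L=\{x_l^{-1}:\ l\in L,\ x_l\in Z_i\}\cup\{x_l:\ l\notin L,\ x_l\in Z_i\}.$$ Then $$\mathcal D_f:\ (I/J)_f=\bigoplus_{i\in C}\Big(\bigoplus_{L\subseteq A}u_if_L^{-1}K[Z_i^L]\Big)$$ is a Stanley decomposition of $(I/J)_f=I_f/J_f$. In particular, $\operatorname{sdepth} I/J\le \operatorname{sdepth}(I/J)_f$.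
   Context: $S_f$ denotes the localization $K[x_1,\dots,x_n,x_j^{-1}: j\in A]$. Its monomials are $x_1^{a_1}\cdots x_n^{a_n}$ with $a_j\in\mathbb Z$ for $j\in A$ and $a_j\in\mathbb N$ for $j\notin A$; they form a $K$-basis of $S_f$. A monomial ideal of $S_f$ is an ideal generated by monomials. For monomial ideals $J\subset I\subset S_f$, the residue classes of the monomials in $I\setminus J$ form a $K$-basis of $I/J$, and these classes are identified with the monomials in $I\setminus J$. For a monomial $u\in I\setminus J$ and a set $Z\subseteq\{x_1,\dots,x_n\}\cup\{x_j^{-1}: j\in A\}$ with $\{x_j,x_j^{-1}\}\not\subseteq Z$ for all $j\in A$, $uK[Z]$ denotes the $K$-subspace of $I/J$ spanned by the monomials $uw$, $w$ a monomial in the elements of $Z$; it is called a Stanley space of $I/J$ if it is a free $K[Z]$-submodule of $I/J$ (i.e. $uw\in I\setminus J$ for all such $w$). Its dimension is $|Z|$. A Stanley decomposition of $I/J$ is a decomposition of $I/J$ as a finite direct sum (of $K$-vector spaces) of Stanley spaces $\mathcal D: I/J=\bigoplus_{i=1}^r u_iK[Z_i]$; $\operatorname{sdepth}\mathcal D=\min_i |Z_i|$ and $\operatorname{sdepth}(I/J)$ is the maximum of $\operatorname{sdepth}\mathcal D$ over all Stanley decompositions $\mathcal D$ of $I/J$. For $A=\emptyset$ this is the usual notion for $S$. For $J\subset I\subset S$, $(I/J)_f=I_f/J_f$ with $I_f=IS_f$, $J_f=JS_f$ monomial ideals of $S_f$. *)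

(* Defs.v *)
(* Monomials of S_f = K[x_1..x_n, x_j^-1 : j in A] are encoded
   by their exponent vectors in Z^n. *)
From mathcomp Require Import all_boot all_order all_algebra.
Set Implicit Arguments. Unset Strict Implicit. Unset Printing Implicit Defensive.
Import Order.TTheory GRing.Theory Num.Theory.
Local Open Scope ring_scope.

Definition mono (n : nat) := {ffun 'I_n -> int}.

Definition mmul n (u w : mono n) : mono n := [ffun k => u k + w k].

(* u is a monomial of S_f, f = prod_{j in A} x_j (exponents >= 0 outside A) *)
Definition is_mono n (A : {set 'I_n}) (u : mono n) : Prop :=
  forall k, k \notin A -> 0 <= u k.

(* A set M of monomials is the monomial set of a monomial ideal of S_f:
   it consists of monomials of S_f and is closed under multiplication by
   monomials of S_f. (For A = set0 these are the monomial ideals of S.) *)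
Definition monomial_ideal n (A : {set 'I_n}) (M : mono n -> Prop) : Prop :=
  (forall u, M u -> is_mono A u) /\
  (forall u w, M u -> is_mono A w -> M (mmul u w)).

(* monomials of the extension I_f = I S_f of a monomial ideal I of S *)
Definition loc n (A : {set 'I_n}) (M : mono n -> Prop) : mono n -> Prop :=
  fun v => exists u w, M u /\ is_mono A w /\ v = mmul u w.

(* A set Z of variables/inverse variables is encoded as (Zp, Zm):
   Zp = {k | x_k in Z}, Zm = {k | x_k^-1 in Z}.  Admissible: Zm in A and
   never both x_k and x_k^-1. *)
Definition adm_vars n (A : {set 'I_n}) (Zp Zm : {set 'I_n}) : Prop :=
  Zm \subset A /\ Zp :&: Zm = set0.

Definition in_vars n (Zp Zm : {set 'I_n}) (w : mono n) : Prop :=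
  forall k, if k \in Zp then 0 <= w k
            else if k \in Zm then w k <= 0 else w k == 0.

Definition zdim n (Zp Zm : {set 'I_n}) : nat := #|Zp| + #|Zm|.

(* The family (u t K[Z_t])_{t in T, P t} is a Stanley decomposition of I/J
   (MI, MJ the monomial sets of I, J):
   - each Z_t admissible;
   - each u_t K[Z_t] is a Stanley space of I/J (u_t w in I \ J for all w);
   - the sum covers I/J (every monomial of I \ J lies in some u_t K[Z_t]);
   - the sum is direct (the monomial sets of the spaces are pairwise
     disjoint; as all spaces are spanned by subsets of the monomial basis
     of I/J, this is exactly directness of the K-vector space sum). *)
Definition stanley_dec n (A : {set 'I_n}) (MI MJ : mono n -> Prop)
    (T : finType) (P : pred T) (u : T -> mono n) (Zp Zm : T -> {set 'I_n}) : Prop :=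
  [/\ forall t, P t -> adm_vars A (Zp t) (Zm t),
      forall t w, P t -> in_vars (Zp t) (Zm t) w ->
        MI (mmul (u t) w) /\ ~ MJ (mmul (u t) w),
      forall v, MI v -> ~ MJ v ->
        exists2 t, P t & exists2 w, in_vars (Zp t) (Zm t) w & v = mmul (u t) w
    & forall t1 t2 w1 w2, P t1 -> P t2 ->
        in_vars (Zp t1) (Zm t1) w1 -> in_vars (Zp t2) (Zm t2) w2 ->
        mmul (u t1) w1 = mmul (u t2) w2 -> t1 = t2].

(* sdepth(I/J) >= d : some Stanley decomposition D of I/J has sdepth D >= d
   (sdepth D = min of the |Z_i|; empty decomposition has sdepth +oo). *)
Definition sdepth_ge n (A : {set 'I_n}) (MI MJ : mono n -> Prop) (d : nat) : Prop :=
  exists r (u : 'I_r -> mono n) (Zp Zm : 'I_r -> {set 'I_n}),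
    stanley_dec A MI MJ predT u Zp Zm /\ (forall i, (d <= zdim (Zp i) (Zm i))%N).

Definition divL n (u : mono n) (L : {set 'I_n}) : mono n :=
  [ffun k => u k - ((k \in L) : nat)%:Z].

(* Main.v *)
Require Import Defs.
From mathcomp Require Import all_boot all_order all_algebra.
From mathcomp Require Import zify.
From Stdlib Require Import FunctionalExtensionality.
Set Implicit Arguments. Unset Strict Implicit. Unset Printing Implicit Defensive.
Local Open Scope ring_scope.

Ltac caseifs := repeat match goal with |- context[if ?b then _ else _] => case: b => /= end.
Ltac prep := caseifs; repeat match goal with |- context[nat_of_bool ?b] => move: (nat_of_bool b) => ? end.

Definition nb n (x : mono n) : nat := (\sum_k absz (x k))%N.

Lemma nb_ge n (x : mono n) k : (absz (x k) <= nb x)%N.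
Proof. by rewrite /nb (bigD1 k) //= leq_addr. Qed.

Definition cvec n (A : {set 'I_n}) (N : nat) : mono n :=
  [ffun k => if k \in A then N%:Z else 0].

Lemma lift_vars n (A Z L : {set 'I_n}) (w : mono n) (N : nat) :
  A \subset Z -> L \subset A -> in_vars (Z :\: L) (L :&: Z) w -> (nb w < N)%N ->
  in_vars Z set0 [ffun k => w k - ((k \in L) : nat)%:Z + cvec A N k].
Proof.
move=> /subsetP AZ /subsetP LA hw hN k.
have bw := nb_ge w k.
have := hw k; rewrite !ffunE !inE.
case kL: (k \in L); case kA: (k \in A); case kZ: (k \in Z) => //=;
  try (by have := LA k; rewrite kL kA => /(_ isT));
  try (by have := AZ k; rewrite kA kZ => /(_ isT)); move=> h; lia.
Qed.

Section Main.
Variables (n : nat) (A : {set 'I_n}) (MI MJ : mono n -> Prop)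
  (r : nat) (u : 'I_r -> mono n) (Z : 'I_r -> {set 'I_n}).
Hypotheses (hI : monomial_ideal set0 MI) (hJ : monomial_ideal set0 MJ)
  (hs : stanley_dec set0 MI MJ predT u Z (fun _ => set0)).

Lemma main1 :
  stanley_dec A (loc A MI) (loc A MJ)
    (fun p : 'I_r * {set 'I_n} => (A \subset Z p.1) && (p.2 \subset A))
    (fun p => divL (u p.1) p.2)
    (fun p => Z p.1 :\: p.2)
    (fun p => p.2 :&: Z p.1).
Proof.
case: hs => hadm hsp hcov hdis.
case: hI => _ hIm; case: hJ => _ hJm.
split.
- move=> [i L] /andP[/= AZ LA]; split => /=.
    exact: subset_trans (subsetIl _ _) LA.
  apply/setP => k; rewrite !inE; by case: (k \in L); case: (k \in Z i).
- move=> [i L] w /andP[/= AZ LA] hw; split.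
  + exists (mmul (u i) [ffun k => if k \in L then 0 else w k]).
    exists [ffun k => if k \in L then w k - 1 else 0].
    split; [|split].
    * apply: (proj1 (hsp i _ isT _)) => k; have := hw k; rewrite !ffunE !inE.
      by case: (k \in L); case: (k \in Z i).
    * move=> k kA; rewrite ffunE; case kL: (k \in L) => //.
      by move/subsetP: LA => /(_ k kL); rewrite (negbTE kA).
    * apply/ffunP => k; rewrite !ffunE; case: (k \in L) => /=; lia.
  + move=> [m0 [w0 [Hm0 [Hw0 E]]]].
    set N := (nb w + nb w0).+1.
    have hN : (nb w < N)%N by rewrite /N; lia.
    have [_ nJ] := hsp i _ isT (lift_vars AZ LA hw hN).
    apply: nJ.
    have -> : mmul (u i) [ffun k => w k - ((k \in L) : nat)%:Z + cvec A N k]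
            = mmul m0 (mmul w0 (cvec A N)).
      apply/ffunP => k; have := congr1 (fun f : mono n => f k) E.
      rewrite !ffunE; prep; lia.
    apply: hJm => // k _; have := Hw0 k; have := nb_ge w0 k.
    rewrite !ffunE; case: (k \in A) => //=; rewrite /N => h1 h2; lia.
- move=> v [m0 [w0 [Hm0 [Hw0 Ev]]]] nJ.
  set bu := (\sum_i nb (u i))%N.
  set N := (nb w0 + nb v + bu).+1.
  have hVI : MI (mmul v (cvec A N)).
    have -> : mmul v (cvec A N) = mmul m0 (mmul w0 (cvec A N)).
      by apply/ffunP => k; rewrite Ev !ffunE; prep; lia.
    apply: hIm => // k _; have := Hw0 k; have := nb_ge w0 k.
    rewrite !ffunE; case: (k \in A) => //=; rewrite /N => h1 h2; lia.
  have hVJ : ~ MJ (mmul v (cvec A N)).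
    move=> hj; apply: nJ; exists (mmul v (cvec A N)), [ffun k => - cvec A N k].
    split; [done|split].
    * by move=> k kA; rewrite !ffunE (negbTE kA).
    * by apply/ffunP => k; rewrite !ffunE; prep; lia.
  have [i _ [w hw EV]] := hcov _ hVI hVJ.
  have EVk k := congr1 (fun f : mono n => f k) EV.
  have AZ : A \subset Z i.
    apply/subsetP => k kA; case kZ: (k \in Z i) => //.
    have := hw k; rewrite kZ inE => /eqP w0k.
    have := EVk k; rewrite !ffunE kA w0k.
    have := nb_ge v k; have := nb_ge (u i) k.
    have : (nb (u i) <= bu)%N by rewrite /bu (bigD1 i) //= leq_addr.
    rewrite /N; lia.
  set L := [set k in A | w k < N%:Z].
  exists (i, L).
    apply/andP; split => //=; apply/subsetP => k; rewrite inE => /andP[] //.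
  exists [ffun k => w k - cvec A N k + ((k \in L) : nat)%:Z].
    move=> k /=; have := hw k; have := EVk k; rewrite !ffunE !inE.
    move/subsetP: AZ => /(_ k) AZk.
    case kA: (k \in A); case kZ: (k \in Z i) => //=;
      try (by have := AZk isT); case hlt: (w k < N%:Z) => /=; move: hlt; lia.
  apply/ffunP => k; have := EVk k; rewrite !ffunE; prep; lia.
- move=> [i1 L1] [i2 L2] w1 w2 /andP[/= AZ1 LA1] /andP[/= AZ2 LA2] hw1 hw2 E.
  have Ek k := congr1 (fun f : mono n => f k) E.
  set N := (nb w1 + nb w2).+1.
  have hN1 : (nb w1 < N)%N by rewrite /N; lia.
  have hN2 : (nb w2 < N)%N by rewrite /N; lia.
  have ei : i1 = i2.
    apply: (hdis _ _ _ _ isT isT (lift_vars AZ1 LA1 hw1 hN1) (lift_vars AZ2 LA2 hw2 hN2)).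
    apply/ffunP => k; have := Ek k; rewrite !ffunE; prep; lia.
  subst i2; congr pair; apply/setP => k.
  have := Ek k; have := hw1 k; have := hw2 k; rewrite !ffunE !inE.
  move/subsetP: LA1 => /(_ k) LA1k; move/subsetP: LA2 => /(_ k) LA2k.
  move/subsetP: AZ1 => /(_ k) AZk.
  case k1: (k \in L1); case k2: (k \in L2); case kZ: (k \in Z i1) => //=;
    try (by move: (AZk (LA1k isT)); rewrite kZ);
    try (by move: (AZk (LA2k isT)); rewrite kZ);
    move=> h2 h1 e; exfalso; lia.
Qed.
End Main.

Lemma reindex n (A : {set 'I_n}) (MI MJ : mono n -> Prop) (T : finType) (P : pred T)
  (u : T -> mono n) (Zp Zm : T -> {set 'I_n}) :
  stanley_dec A MI MJ P u Zp Zm ->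
  stanley_dec A MI MJ predT (fun i : 'I_#|P| => u (enum_val i))
    (fun i => Zp (enum_val i)) (fun i => Zm (enum_val i)).
Proof.
case=> h1 h2 h3 h4; split.
- by move=> i _; apply: h1; exact: enum_valP.
- by move=> i w _; apply: h2; exact: enum_valP.
- move=> v hv nv; have [t Pt [w hw ->]] := h3 v hv nv.
  have Pt' : t \in P by [].
  exists (enum_rank_in Pt' t) => //; exists w; by rewrite enum_rankK_in.
- move=> i1 i2 w1 w2 _ _ hw1 hw2 E; apply: enum_val_inj.
  exact: (h4 _ _ _ _ (enum_valP i1) (enum_valP i2) hw1 hw2 E).
Qed.

Theorem theorem3p1 (n : nat) (A : {set 'I_n}) (MI MJ : mono n -> Prop)
  (r : nat) (u : 'I_r -> mono n) (Z : 'I_r -> {set 'I_n}) :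
  monomial_ideal set0 MI -> monomial_ideal set0 MJ ->
  (forall v, MJ v -> MI v) ->
  stanley_dec set0 MI MJ predT u Z (fun _ => set0) ->
  let C := fun i : 'I_r => A \subset Z i in
  stanley_dec A (loc A MI) (loc A MJ)
    (fun p : 'I_r * {set 'I_n} => C p.1 && (p.2 \subset A))
    (fun p => divL (u p.1) p.2)
    (fun p => Z p.1 :\: p.2)
    (fun p => p.2 :&: Z p.1)
  /\ (forall d : nat, sdepth_ge set0 MI MJ d -> sdepth_ge A (loc A MI) (loc A MJ) d).
Proof.
move=> hI hJ _ hs C; split; first exact: main1.
move=> d [r' [u' [Zp [Zm [hs' hd]]]]].
have EZ : Zm = fun _ => set0.
  apply: functional_extensionality => t.
  by case: hs' => /(_ t isT) [] /=; rewrite subset0 => /eqP.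
subst Zm.
have := reindex (main1 A hI hJ hs').
set P := (fun p : 'I_r' * {set 'I_n} => _).
move=> hd'; exists #|P|; eexists; eexists; eexists; split; first exact: hd'.
move=> i /=; case: (enum_val i) => j L /=.
have := hd j; rewrite /zdim cards0 addn0 addnC setIC cardsID //.
Qed.
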